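(* For every $k\ge 1$, the bi-hypergraph obtained from $\mathcal H_{2k+1}$ by adding two new vertices $u$ and $v$, removing the edge $\{v_{1,1},v_{1,2},v_{1,3}\}$, and adding the edges $\{u,v_{1,1},v_{1,2}\}$, $\{v,v_{1,2},v_{1,3}\}$, and $\{u,v_{1,j},v_{2k+1,j}\}$ and $\{v,v_{1,j+1},v_{2k+1,j+1}\}$ for all $j\in[2]$, is minimal uncolorable.
   Context: A bi-hypergraph $\mathcal H=(V,E)$ consists of a finite vertex set $V$ and a set $E$ of subsets of $V$, called edges, with no edge contained in another. A mapping $f:V\to\mathbb N$ is a proper coloring of $\mathcal H$ if $1<|f(e)|<|e|$ for every $e\in E$, where $f(e)=\{f(x):x\in e\}$. $\mathcal H$ is colorable if it has a proper coloring, and uncolorable otherwise. A subhypergraph of $\mathcal H$ is a bi-hypergraph $(V',E')$ with $V'\subseteq V$, $E'\subseteq E$; $\mathcal H$ is minimal uncolorable if it is uncolorable but every proper subhypergraph of it is colorable. For $k\ge 2$, $\mathcal H_k$ is the $3$-uniform bi-hypergraph with vertex set $\{v_{i,j}: i\in[k], j\in[3]\}$ (all distinct), with the convention $v_{i,4}=v_{i,1}$, $v_{i,5}=v_{i,2}$, whose edges are the sets $\{v_{i,1},v_{i,2},v_{i,3}\}$ for all $i\in[k]$ and the sets $\{v_{q+1,j},v_{q,j},v_{q,j+t}\}$ for all $q\in[k-1]$, $j\in[3]$, $t\in\{1,2\}$. *)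

(* Defs.v *)
From mathcomp Require Import all_boot.
Set Implicit Arguments. Unset Strict Implicit. Unset Printing Implicit Defensive.

Section BiHypergraph.
Variable T : finType.

Definition bi_hypergraph (Vs : {set T}) (E : {set {set T}}) : Prop :=
  (forall e, e \in E -> e \subset Vs) /\
  (forall e1 e2, e1 \in E -> e2 \in E -> e1 \subset e2 -> e1 = e2).

Definition ncolors (f : T -> nat) (e : {set T}) : nat :=
  size (undup [seq f x | x <- enum e]).

Definition proper_coloring (E : {set {set T}}) (f : T -> nat) : Prop :=
  forall e, e \in E -> 1 < ncolors f e < #|e|.

(* colourings only matter on the vertex set, since edges lie inside it *)
Definition colorable (Vs : {set T}) (E : {set {set T}}) : Prop :=
  exists f : T -> nat, proper_coloring E f.

Definition subhypergraph (Vs' : {set T}) (E' : {set {set T}})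
    (Vs : {set T}) (E : {set {set T}}) : Prop :=
  bi_hypergraph Vs' E' /\ Vs' \subset Vs /\ E' \subset E.

Definition minimal_uncolorable (Vs : {set T}) (E : {set {set T}}) : Prop :=
  bi_hypergraph Vs E /\ ~ colorable Vs E /\
  (forall Vs' E', subhypergraph Vs' E' Vs E -> (Vs', E') <> (Vs, E) ->
     colorable Vs' E').
End BiHypergraph.

(* Ambient type for H_{m+1} plus two extra vertices:
   inl (i, j) stands for v_{i+1, j+1}; inr false = u, inr true = v. *)
Definition Vt (m : nat) : finType := ('I_m.+1 * 'I_3 + bool)%type.

(* v_{i,j} for 1 <= i <= m+1, j >= 1, with v_{i,4} = v_{i,1}, v_{i,5} = v_{i,2} *)
Definition vx (m i j : nat) : Vt m := inl (inord i.-1, inord (j.-1 %% 3)).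
Definition uu (m : nat) : Vt m := inr false.
Definition vv (m : nat) : Vt m := inr true.

Definition tri (m i : nat) : {set Vt m} := [set vx m i 1; vx m i 2; vx m i 3].

(* edges of H_n with n = m+1 *)
Definition H_edges (m : nat) : {set {set Vt m}} :=
  [set e | [exists i : 'I_m.+1, e == tri m i.+1] ||
           [exists q : 'I_m, exists j : 'I_3, exists t : 'I_2,
              e == [set vx m q.+2 j.+1; vx m q.+1 j.+1; vx m q.+1 (j.+1 + t.+1)]]].

Definition G_edges (m : nat) : {set {set Vt m}} :=
  (H_edges m :\ tri m 1)
  :|: [set [set uu m; vx m 1 1; vx m 1 2]; [set vv m; vx m 1 2; vx m 1 3]]
  :|: [set e | [exists j : 'I_2,
         (e == [set uu m; vx m 1 j.+1; vx m m.+1 j.+1]) ||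
         (e == [set vv m; vx m 1 j.+2; vx m m.+1 j.+2])]].

(* Main.v *)
Require Import Defs.
From mathcomp Require Import all_boot zify.
Set Implicit Arguments. Unset Strict Implicit. Unset Printing Implicit Defensive.

Definition tc (a b c : nat) : bool := size (undup [:: a; b; c]) == 2.
Lemma tcP a b c : tc a b c <-> (a = b /\ b <> c) \/ (a = c /\ a <> b) \/ (b = c /\ a <> b).
Proof.
rewrite /tc /= !inE.
case: (eqVneq b c) => bc; case: (eqVneq a b) => ab; case: (eqVneq a c) => ac;
  rewrite /= ?inE ?bc ?ab ?ac ?eqxx /=; try (subst; by split => H; lia).
all: try (split => H; (by []) || lia).
Qed.

Lemma ncolors3 (T : finType) (f : T -> nat) x y z :
  ncolors f [set x; y; z] = size (undup [:: f x; f y; f z]).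
Proof.
rewrite /ncolors; apply: perm_size; apply: uniq_perm; try exact: undup_uniq.
move=> c; rewrite !mem_undup; apply/mapP/idP.
- by case=> w; rewrite mem_enum !inE -orbA => /or3P[]/eqP-> ->; rewrite ?inE eqxx ?orbT.
- rewrite !inE => /or3P[]/eqP->.
  + by exists x => //; rewrite mem_enum !inE eqxx.
  + by exists y => //; rewrite mem_enum !inE eqxx ?orbT.
  + by exists z => //; rewrite mem_enum !inE eqxx ?orbT.
Qed.

Lemma card3 (T : finType) (x y z : T) :
  #|[set x; y; z]| = (z \notin [set x; y]) + (x != y).+1.
Proof. by rewrite setUC cardsU1 cards2. Qed.

Lemma card3_le (T : finType) (x y z : T) : #|[set x; y; z]| <= 3.
Proof. by rewrite card3; case: (_ \notin _); case: (_ != _). Qed.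

Lemma card3_eq (T : finType) (x y z : T) : x != y -> x != z -> y != z ->
  #|[set x; y; z]| = 3.
Proof.
move=> xy xz yz; rewrite card3 xy !inE negb_or eq_sym xz eq_sym yz //.
Qed.

Lemma proper3 (T : finType) (f : T -> nat) x y z :
  1 < ncolors f [set x; y; z] < #|[set x; y; z]| -> tc (f x) (f y) (f z).
Proof.
rewrite ncolors3 /tc => /andP[h1 h2]; have := card3_le x y z; lia.
Qed.

Lemma proper3' (T : finType) (f : T -> nat) x y z : x != y -> x != z -> y != z ->
  tc (f x) (f y) (f z) -> 1 < ncolors f [set x; y; z] < #|[set x; y; z]|.
Proof.
move=> xy xz yz; rewrite ncolors3 card3_eq // /tc => /eqP->; by [].
Qed.


Lemma vx_neq m i i' j j' : 0 < i <= m.+1 -> 0 < i' <= m.+1 ->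
  (i != i') || (j.-1 %% 3 != j'.-1 %% 3) -> vx m i j != vx m i' j'.
Proof.
move=> /andP[i0 i1] /andP[i0' i1'] H; apply/eqP; rewrite /vx; case.
move=> /(congr1 val); rewrite /= !inordK; try lia.
move=> E1 /(congr1 val); rewrite /= !inordK ?ltn_pmod // => E2.
by move: H; rewrite E2 eqxx orbF; apply/negP; rewrite negbK; apply/eqP; lia.
Qed.

Definition ie m (q j t : nat) : {set Vt m} :=
  [set vx m q.+2 j.+1; vx m q.+1 j.+1; vx m q.+1 (j.+1 + t.+1)].
Definition sU1 m : {set Vt m} := [set uu m; vx m 1 1; vx m 1 2].
Definition sV1 m : {set Vt m} := [set vv m; vx m 1 2; vx m 1 3].
Definition sU m (j : nat) : {set Vt m} := [set uu m; vx m 1 j.+1; vx m m.+1 j.+1].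
Definition sV m (j : nat) : {set Vt m} := [set vv m; vx m 1 j.+2; vx m m.+1 j.+2].

Lemma tri1_notin m i j : 1 < i <= m.+1 -> vx m i j \notin tri m 1.
Proof.
move=> /andP[i1 i2]; rewrite /tri !inE !negb_or.
rewrite !vx_neq //; try lia; apply/orP; left; lia.
Qed.

Lemma memH m e : e != tri m 1 -> e \in H_edges m -> e \in G_edges m.
Proof. by move=> e1 eH; rewrite /G_edges !in_setU in_setD1 e1 eH. Qed.

Lemma tri_mem m (i : 'I_m.+1) : 0 < i -> tri m i.+1 \in G_edges m.
Proof.
move=> i0; apply: memH.
  apply/eqP => E; have := @tri1_notin m i.+1 1.
  rewrite -E /tri !inE eqxx /= => H; suff: false by []; apply: H; have := ltn_ord i; lia.
by rewrite /H_edges inE; apply/orP; left; apply/existsP; exists i.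
Qed.

Lemma ie_mem m (q : 'I_m) (j : 'I_3) (t : 'I_2) : ie m q j t \in G_edges m.
Proof.
apply: memH.
  apply/eqP => E; have := @tri1_notin m q.+2 j.+1.
  rewrite -E /ie !inE eqxx /= => H; suff: false by []; apply: H; have := ltn_ord q; lia.
rewrite /H_edges inE; apply/orP; right; apply/existsP; exists q.
by apply/existsP; exists j; apply/existsP; exists t.
Qed.

Lemma sU1_mem m : sU1 m \in G_edges m.
Proof. by rewrite /G_edges !inE eqxx /= orbT. Qed.
Lemma sV1_mem m : sV1 m \in G_edges m.
Proof. by rewrite /G_edges !inE eqxx /= !orbT. Qed.
Lemma sU_mem m (j : 'I_2) : sU m j \in G_edges m.
Proof. by rewrite /G_edges !inE; apply/orP; right; apply/existsP; exists j; rewrite eqxx. Qed.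
Lemma sV_mem m (j : 'I_2) : sV m j \in G_edges m.
Proof. by rewrite /G_edges !inE; apply/orP; right; apply/existsP; exists j; rewrite eqxx orbT. Qed.

Lemma G_cases m e : e \in G_edges m ->
  [\/ (exists2 i : 'I_m.+1, 0 < i & e = tri m i.+1),
      (exists q : 'I_m, exists j : 'I_3, exists t : 'I_2, e = ie m q j t),
      e = sU1 m | e = sV1 m \/ (exists j : 'I_2, e = sU m j \/ e = sV m j)].
Proof.
rewrite /G_edges !in_setU in_setD1 => /orP[/orP[/andP[e1 eH]|]|].
- move: eH; rewrite /H_edges inE => /orP[/existsP[i /eqP Ei]|/existsP[q /existsP[j /existsP[t /eqP E]]]].
  + apply: Or41; exists i => //; case: (posnP i) => [i0|//].
    by move: e1; rewrite Ei i0 eqxx.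
  + by apply: Or42; exists q, j, t.
- by rewrite !inE => /orP[]/eqP->; [apply: Or43| apply: Or44; left].
- by rewrite inE => /existsP[j /orP[]/eqP->]; apply: Or44; right; exists j; [left|right].
Qed.

Lemma uvx m i j : uu m != vx m i j. Proof. by []. Qed.
Lemma vvx m i j : vv m != vx m i j. Proof. by []. Qed.

Lemma edge3 m e : 0 < m -> e \in G_edges m ->
  exists x y z, [/\ e = [set x; y; z], x != y, x != z & y != z].
Proof.
move=> m0 /G_cases [[i i0 ->]|[q [j [t ->]]]|->|[->|[j [->|->]]]].
- have := ltn_ord i => im.
  exists (vx m i.+1 1), (vx m i.+1 2), (vx m i.+1 3); split => //; apply: vx_neq => //; lia.
- have := ltn_ord q => qm; have := ltn_ord j => jm; have := ltn_ord t => tm.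
  exists (vx m q.+2 j.+1), (vx m q.+1 j.+1), (vx m q.+1 (j.+1 + t.+1)); split => //;
    apply: vx_neq; try lia.
- exists (uu m), (vx m 1 1), (vx m 1 2); split => //; apply: vx_neq => //; lia.
- exists (vv m), (vx m 1 2), (vx m 1 3); split => //; apply: vx_neq => //; lia.
- have := ltn_ord j => jm.
  exists (uu m), (vx m 1 j.+1), (vx m m.+1 j.+1); split => //; apply: vx_neq => //; lia.
- have := ltn_ord j => jm.
  exists (vv m), (vx m 1 j.+2), (vx m m.+1 j.+2); split => //; apply: vx_neq => //; lia.
Qed.

Lemma edge_card m e : 0 < m -> e \in G_edges m -> #|e| = 3.
Proof. by move=> m0 /(edge3 m0) [x [y [z [-> ? ? ?]]]]; apply: card3_eq. Qed.


Definition compat (x1 x2 x3 y1 y2 y3 : nat) : Prop :=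
  tc y1 x1 x2 /\ tc y1 x1 x3 /\ tc y2 x2 x3 /\ tc y2 x2 x1 /\ tc y3 x3 x1 /\ tc y3 x3 x2.

Ltac sv := repeat match goal with
 | H : ?a <> ?a |- _ => exfalso; exact (H erefl)
 | H : ?a = ?b |- _ => first [subst a | subst b | clear H]
 | H : _ /\ _ |- _ => destruct H
 | H : _ \/ _ |- _ => destruct H
 end; intuition congruence.

Definition specials (u v c1 c2 c3 d1 d2 d3 : nat) : Prop :=
  tc u c1 c2 /\ tc v c2 c3 /\ tc u c1 d1 /\ tc u c2 d2 /\ tc v c2 d2 /\ tc v c3 d3.

Lemma step2 x1 x2 x3 y1 y2 y3 z1 z2 z3 : tc x1 x2 x3 -> tc y1 y2 y3 -> tc z1 z2 z3 ->
  compat x1 x2 x3 y1 y2 y3 -> compat y1 y2 y3 z1 z2 z3 -> [/\ z1 = x1, z2 = x2 & z3 = x3].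
Proof.
move=> /tcP hx /tcP hy /tcP hz [/tcP h1 [/tcP h2 [/tcP h3 [/tcP h4 [/tcP h5 /tcP h6]]]]].
move=> [/tcP g1 [/tcP g2 [/tcP g3 [/tcP g4 [/tcP g5 /tcP g6]]]]].
suff: z1 = x1 /\ z2 = x2 /\ z3 = x3 by case=> ? [].
sv.
Qed.

Lemma stepA x1 x2 x3 y1 y2 y3 : ~~ tc x1 x2 x3 -> tc y1 y2 y3 ->
  compat x1 x2 x3 y1 y2 y3 -> [/\ x2 = x1, x3 = x1, y1 <> x1, y2 <> x1 & y3 <> x1].
Proof.
move=> hx /tcP hy [/tcP h1 [/tcP h2 [/tcP h3 [/tcP h4 [/tcP h5 /tcP h6]]]]].
have {}hx : ~ ((x1 = x2 /\ x2 <> x3) \/ (x1 = x3 /\ x1 <> x2) \/ (x2 = x3 /\ x1 <> x2)).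
  by move=> /tcP; apply/negP.
suff: x2 = x1 /\ x3 = x1 /\ y1 <> x1 /\ y2 <> x1 /\ y3 <> x1 by case=> ? [? [? []]].
sv.
Qed.

Lemma stepB a y1 y2 y3 z1 z2 z3 : tc y1 y2 y3 -> tc z1 z2 z3 ->
  compat y1 y2 y3 z1 z2 z3 -> y1 <> a -> y2 <> a -> y3 <> a ->
  [/\ z1 <> a, z2 <> a & z3 <> a].
Proof.
move=> /tcP hx /tcP hy [/tcP h1 [/tcP h2 [/tcP h3 [/tcP h4 [/tcP h5 /tcP h6]]]]].
move=> *; suff: z1 <> a /\ z2 <> a /\ z3 <> a by case=> ? []. 
sv.
Qed.

Lemma stepC u v a z1 z2 z3 : tc z1 z2 z3 -> z1 <> a -> z2 <> a -> z3 <> a ->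
  specials u v a a a z1 z2 z3 -> False.
Proof.
move=> /tcP hz ? ? ? [/tcP h1 [/tcP h2 [/tcP h3 [/tcP h4 [/tcP h5 /tcP h6]]]]]; sv.
Qed.

Lemma stepC1 u v x1 x2 x3 : tc x1 x2 x3 -> specials u v x1 x2 x3 x1 x2 x3 -> False.
Proof.
move=> /tcP hz [/tcP h1 [/tcP h2 [/tcP h3 [/tcP h4 [/tcP h5 /tcP h6]]]]]; sv.
Qed.



Lemma TRI (m : nat) (f : Vt m -> nat) (Hf : proper_coloring (G_edges m) f) i : 1 < i <= m.+1 -> tc (f (vx m i 1)) (f (vx m i 2)) (f (vx m i 3)).
Proof.
move=> /andP[i1 i2]; have hi : i.-1 < m.+1 by lia.
have := Hf _ (@tri_mem m (Ordinal hi) _); rewrite /= prednK ?(ltn_trans _ i1) // => H.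
by apply: proper3; apply: H; lia.
Qed.

Lemma CMP (m : nat) (f : Vt m -> nat) (Hf : proper_coloring (G_edges m) f) l : 0 < l <= m ->
  compat (f (vx m l 1)) (f (vx m l 2)) (f (vx m l 3)) (f (vx m l.+1 1)) (f (vx m l.+1 2)) (f (vx m l.+1 3)).
Proof.
move=> /andP[l1 l2]; have hl : l.-1 < m by lia.
have E := fun j t => Hf _ (@ie_mem m (Ordinal hl) j t).
rewrite /ie /= prednK // in E.
split; first exact: proper3 (E (@Ordinal 3 0 isT) (@Ordinal 2 0 isT)).
split; first exact: proper3 (E (@Ordinal 3 0 isT) (@Ordinal 2 1 isT)).
split; first exact: proper3 (E (@Ordinal 3 1 isT) (@Ordinal 2 0 isT)).
split; first exact: proper3 (E (@Ordinal 3 1 isT) (@Ordinal 2 1 isT)).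
split; first exact: proper3 (E (@Ordinal 3 2 isT) (@Ordinal 2 0 isT)).
exact: proper3 (E (@Ordinal 3 2 isT) (@Ordinal 2 1 isT)).
Qed.

Lemma SPC (m : nat) (f : Vt m -> nat) (Hf : proper_coloring (G_edges m) f) : specials (f (uu m)) (f (vv m)) (f (vx m 1 1)) (f (vx m 1 2)) (f (vx m 1 3))
   (f (vx m m.+1 1)) (f (vx m m.+1 2)) (f (vx m m.+1 3)).
Proof.
split; first by move: (Hf _ (sU1_mem m)); rewrite /sU1 /sV1 /sU /sV => /proper3.
split; first by move: (Hf _ (sV1_mem m)); rewrite /sU1 /sV1 /sU /sV => /proper3.
split; first by move: (Hf _ (sU_mem m (@Ordinal 2 0 isT))); rewrite /sU1 /sV1 /sU /sV => /proper3.
split; first by move: (Hf _ (sU_mem m (@Ordinal 2 1 isT))); rewrite /sU1 /sV1 /sU /sV => /proper3.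
split; first by move: (Hf _ (sV_mem m (@Ordinal 2 0 isT))); rewrite /sU1 /sV1 /sU /sV => /proper3.
by move: (Hf _ (sV_mem m (@Ordinal 2 1 isT))); rewrite /sU1 /sV1 /sU /sV => /proper3.
Qed.

Lemma propag (m : nat) (f : Vt m -> nat) (Hf : proper_coloring (G_edges m) f) i l : 0 < i -> tc (f (vx m i 1)) (f (vx m i 2)) (f (vx m i 3)) -> i + l.*2 <= m.+1 ->
  [/\ f (vx m (i + l.*2) 1) = f (vx m i 1), f (vx m (i + l.*2) 2) = f (vx m i 2) & f (vx m (i + l.*2) 3) = f (vx m i 3)].
Proof.
move=> i0 ti; elim: l => [|l IH] hl; first by rewrite addn0.
rewrite doubleS in hl.
have [e1 e2 e3] := IH ltac:(lia).
have -> : i + l.+1.*2 = (i + l.*2).+2 by rewrite doubleS !addnS.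
have [z1 z2 z3] : [/\ f (vx m (i + l.*2).+2 1) = f (vx m (i + l.*2) 1), f (vx m (i + l.*2).+2 2) = f (vx m (i + l.*2) 2)
   & f (vx m (i + l.*2).+2 3) = f (vx m (i + l.*2) 3)].
  apply: (@step2 _ _ _ (f (vx m (i + l.*2).+1 1)) (f (vx m (i + l.*2).+1 2)) (f (vx m (i + l.*2).+1 3))).
  - by rewrite e1 e2 e3.
  - apply: (TRI Hf); lia.
  - apply: (TRI Hf); lia.
  - apply: (CMP Hf); lia.
  - apply: (CMP Hf); lia.
by rewrite z1 z2 z3.
Qed.


Lemma not_colorable k : 0 < k -> ~ colorable [set: Vt k.*2] (G_edges k.*2).
Proof.
move=> k0 [f Hf].
have hk2 : 2 <= k.*2 by rewrite -muln2; lia.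
have Sp := SPC Hf.
case: (boolP (tc (f (vx k.*2 1 1)) (f (vx k.*2 1 2)) (f (vx k.*2 1 3)))) => t1.
- have [e1 e2 e3] := propag Hf (l := k) (ltn0Sn 0) t1 ltac:(lia).
  rewrite add1n in e1 e2 e3.
  rewrite e1 e2 e3 in Sp; exact: stepC1 t1 Sp.
- have [a2 a3 b1 b2 b3] := stepA t1 (TRI Hf (i := 2) ltac:(lia)) (CMP Hf (l := 1) ltac:(lia)).
  have [c1 c2 c3] := stepB (TRI Hf (i := 2) ltac:(lia)) (TRI Hf (i := 3) ltac:(lia))
      (CMP Hf (l := 2) ltac:(lia)) b1 b2 b3.
  have [e1 e2 e3] := propag Hf (l := k.-1) (isT : 0 < 3) (TRI Hf (i := 3) ltac:(lia)) ltac:(rewrite -!muln2; lia).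
  have E : k.*2.+1 = 3 + (k.-1).*2 by rewrite -!muln2; lia.
  rewrite E in Sp.
  rewrite e1 e2 e3 a2 a3 in Sp.
  exact: stepC (TRI Hf (i := 3) ltac:(lia)) c1 c2 c3 Sp.
Qed.


Lemma proper3'' (T : finType) (f : T -> nat) x y z : #|[set x; y; z]| = 3 ->
  tc (f x) (f y) (f z) -> 1 < ncolors f [set x; y; z] < #|[set x; y; z]|.
Proof. by move=> c3; rewrite ncolors3 c3 /tc => /eqP->. Qed.

Lemma col_ok m (f : Vt m -> nat) e : 0 < m ->
  (forall i : 'I_m.+1, 0 < i -> tri m i.+1 != e ->
     tc (f (vx m i.+1 1)) (f (vx m i.+1 2)) (f (vx m i.+1 3))) ->
  (forall (q : 'I_m) (j : 'I_3) (t : 'I_2), ie m q j t != e ->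
     tc (f (vx m q.+2 j.+1)) (f (vx m q.+1 j.+1)) (f (vx m q.+1 (j.+1 + t.+1)))) ->
  (sU1 m != e -> tc (f (uu m)) (f (vx m 1 1)) (f (vx m 1 2))) ->
  (sV1 m != e -> tc (f (vv m)) (f (vx m 1 2)) (f (vx m 1 3))) ->
  (forall j : 'I_2, sU m j != e -> tc (f (uu m)) (f (vx m 1 j.+1)) (f (vx m m.+1 j.+1))) ->
  (forall j : 'I_2, sV m j != e -> tc (f (vv m)) (f (vx m 1 j.+2)) (f (vx m m.+1 j.+2))) ->
  proper_coloring (G_edges m :\ e) f.
Proof.
move=> m0 h1 h2 h3 h4 h5 h6 e'; rewrite in_setD1 => /andP[ne eG].
have c3 := edge_card m0 eG.
case: (G_cases eG) c3 ne => [[i i0 ->]|[q [j [t ->]]]|->|[->|[j [->|->]]]] c3 ne;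
  apply: proper3'' => //; auto.
Qed.

Definition fcol m (F : nat -> nat -> nat) (cu cv : nat) (x : Vt m) : nat :=
  match x with inl p => F p.1.+1 p.2 | inr b => if b then cv else cu end.

Lemma fcol_vx m F cu cv i j : 0 < i <= m.+1 -> fcol F cu cv (vx m i j) = F i (j.-1 %% 3).
Proof.
move=> /andP[i0 i1]; rewrite /vx /= !inordK ?ltn_pmod //; last by lia.
by rewrite prednK.
Qed.

Lemma fcolE m F cu cv i j : 0 < i <= m.+1 -> j < 3 -> fcol F cu cv (vx m i j.+1) = F i j.
Proof. by move=> hi hj; rewrite fcol_vx // modn_small. Qed.

Lemma fcolE' m F cu cv i j t : 0 < i <= m.+1 ->
  fcol F cu cv (vx m i (j.+1 + t)) = F i ((j + t) %% 3).
Proof. by move=> hi; rewrite fcol_vx. Qed.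

Definition Sx (p x y : nat) (pos : nat) : nat := if pos == p then x else y.
Definition alt (p i : nat) : nat -> nat := if odd i then Sx p 0 1 else Sx p 1 0.

Lemma alt_tc p i : p < 3 -> tc (alt p i 0) (alt p i 1) (alt p i 2).
Proof. by rewrite /alt; case: (odd i); case: p => [|[|[|]]]. Qed.

Lemma alt_cmp p i j t : p < 3 -> j < 3 -> t < 2 ->
  tc (alt p i.+1 j) (alt p i j) (alt p i ((j + t.+1) %% 3)).
Proof.
rewrite /alt /=; case: (odd i) => /=; case: p => [|[|[|]]] //;
  case: j => [|[|[|]]] //; case: t => [|[|]] //.
Qed.

Definition third (j t : nat) := 3 - j - (j + t.+1) %% 3.

Lemma bnd j0 t0 j t i : j0 < 3 -> t0 < 2 -> j < 3 -> t < 2 -> (j != j0) || (t != t0) ->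
  tc (alt j0 i.+1 j) (alt (third j0 t0) i j) (alt (third j0 t0) i ((j + t.+1) %% 3)).
Proof.
rewrite /alt /=; case: (odd i) => /=; case: j0 => [|[|[|]]] //; case: t0 => [|[|]] //;
  case: j => [|[|[|]]] //; case: t => [|[|]] //.
Qed.

Definition FG (q0 r j0 i : nat) : nat -> nat := if i <= q0 then alt r i else alt j0 i.

Lemma famG m (e : {set Vt m}) q0 r j0 cu cv : 0 < m -> r < 3 -> j0 < 3 ->
  (forall (q : 'I_m) (j : 'I_3) (t : 'I_2), ie m q j t != e -> q.+1 = q0 ->
     tc (alt j0 q0.+1 j) (alt r q0 j) (alt r q0 ((j + t.+1) %% 3))) ->
  (sU1 m != e -> tc cu (FG q0 r j0 1 0) (FG q0 r j0 1 1)) ->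
  (sV1 m != e -> tc cv (FG q0 r j0 1 1) (FG q0 r j0 1 2)) ->
  (forall j : 'I_2, sU m j != e -> tc cu (FG q0 r j0 1 j) (FG q0 r j0 m.+1 j)) ->
  (forall j : 'I_2, sV m j != e -> tc cv (FG q0 r j0 1 j.+1) (FG q0 r j0 m.+1 j.+1)) ->
  proper_coloring (G_edges m :\ e) (fcol (FG q0 r j0) cu cv).
Proof.
move=> m0 r3 j3 hb h3 h4 h5 h6; apply: col_ok => //.
- move=> i i0 _; have := ltn_ord i => im.
  rewrite !fcolE //; try lia.
  by rewrite /FG; case: ifP => _; apply: alt_tc.
- move=> q j t ne; have := ltn_ord q => qm; have := ltn_ord j => jm; have := ltn_ord t => tm.
  rewrite (@fcolE' m _ _ _ q.+1 j t.+1) ?fcolE; try lia.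
  rewrite /FG; case: (ltngtP q.+1 q0) => hq.
  + by apply: alt_cmp.
  + by apply: alt_cmp.
  + by move: (hb q j t ne hq); rewrite -hq.
- by move=> ne; rewrite !fcolE //=; apply: h3.
- by move=> ne; rewrite !fcolE //=; apply: h4.
- by move=> j ne; have := ltn_ord j => jm; rewrite !fcolE //=; try lia; apply: h5.
- by move=> j ne; have := ltn_ord j => jm; rewrite !fcolE //=; try lia; apply: h6.
Qed.

Definition post (b : bool) (l : nat) : nat -> nat :=
  if odd l then Sx 0 2 (~~ b) else Sx 0 (~~ b) 2.
Definition FT (i0 l : nat) : nat -> nat :=
  if l < i0 then alt 0 l else if l == i0 then (fun _ => nat_of_bool (odd i0)) else post (odd i0) l.

Lemma post_tc b l : tc (post b l 0) (post b l 1) (post b l 2).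
Proof. by rewrite /post; case: (odd l); case: b. Qed.

Lemma post_cmp b l j t : j < 3 -> t < 2 ->
  tc (post b l.+1 j) (post b l j) (post b l ((j + t.+1) %% 3)).
Proof.
rewrite /post /=; case: (odd l); case: b => /=; case: j => [|[|[|]]] //; case: t => [|[|]] //.
Qed.

Lemma mono_cmp1 l j t : j < 3 -> t < 2 ->
  tc (odd l.+1) (alt 0 l j) (alt 0 l ((j + t.+1) %% 3)).
Proof.
rewrite /alt /=; case: (odd l) => /=; case: j => [|[|[|]]] //; case: t => [|[|]] //.
Qed.

Lemma mono_cmp2 l j : j < 3 -> tc (post (odd l) l.+1 j) (odd l) (odd l).
Proof. rewrite /post /=; case: (odd l) => /=; case: j => [|[|[|]]] //. Qed.

Lemma famT m i0 : 0 < m -> ~~ odd m -> 1 < i0 <= m.+1 ->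
  proper_coloring (G_edges m :\ tri m i0) (fcol (FT i0) 0 0).
Proof.
move=> m0 me /andP[i1 i2]; apply: col_ok => //.
- move=> i ip ne; have := ltn_ord i => im.
  have ne' : i.+1 != i0 by apply: contraNneq ne => ->.
  rewrite !fcolE //; try lia.
  rewrite /FT (negPf ne'); case: ifP => _; [exact: alt_tc | exact: post_tc].
- move=> q j t ne; have := ltn_ord q => qm; have := ltn_ord j => jm; have := ltn_ord t => tm.
  rewrite (@fcolE' m _ _ _ q.+1 j t.+1) ?fcolE; try lia.
  rewrite /FT; case: (ltngtP q.+2 i0) => hq.
  + by apply: alt_cmp.
  + case: (eqVneq q.+1 i0) => hq'.
    * by rewrite -hq'; apply: mono_cmp2.
    * exact: post_cmp.
  + by rewrite -hq; apply: mono_cmp1.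
- by move=> _; rewrite !fcolE //= /FT i1 /alt /=.
- by move=> _; rewrite !fcolE //= /FT i1 /alt /=.
- move=> j _; have := ltn_ord j => jm; rewrite !fcolE //=; try lia.
  rewrite /FT i1 ltnNge i2 /=; case: eqVneq => [<-|_];
    rewrite /alt /post /Sx /= ?(negPf me) /=; case: (odd i0); case: j jm => [[|[|]] ?] //=.
- move=> j _; have := ltn_ord j => jm; rewrite !fcolE //=; try lia.
  rewrite /FT i1 ltnNge i2 /=; case: eqVneq => [<-|_];
    rewrite /alt /post /Sx /= ?(negPf me) /=; case: (odd i0); case: j jm => [[|[|]] ?] //=.
Qed.


Lemma famS m e r cu cv : 0 < m -> ~~ odd m -> r < 3 ->
  (sU1 m != e -> tc cu (Sx r 0 1 0) (Sx r 0 1 1)) ->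
  (sV1 m != e -> tc cv (Sx r 0 1 1) (Sx r 0 1 2)) ->
  (forall j : 'I_2, sU m j != e -> tc cu (Sx r 0 1 j) (Sx r 0 1 j)) ->
  (forall j : 'I_2, sV m j != e -> tc cv (Sx r 0 1 j.+1) (Sx r 0 1 j.+1)) ->
  proper_coloring (G_edges m :\ e) (fcol (FG m.+1 r r) cu cv).
Proof.
move=> m0 me r3 h3 h4 h5 h6.
have FGE i : FG m.+1 r r i = alt r i by rewrite /FG if_same.
have A1 : alt r 1 = Sx r 0 1 by [].
have An : alt r m.+1 = Sx r 0 1 by rewrite /alt /= (negPf me).
apply: famG => //.
- by move=> q j t _ _; apply: alt_cmp.
- by move=> j; rewrite !FGE A1 An; exact: (h5 j).
- by move=> j; rewrite !FGE A1 An; exact: (h6 j).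
Qed.

Lemma colorable_minus m e : 0 < m -> ~~ odd m -> e \in G_edges m ->
  exists f, proper_coloring (G_edges m :\ e) f.
Proof.
move=> m0 me eG; case: (G_cases eG) => [[i i0 ->]|[q [j [t ->]]]|->|[->|[j [->|->]]]].
- exists (fcol (FT i.+1) 0 0); apply: famT => //; have := ltn_ord i; lia.
- have := ltn_ord q => qm; have := ltn_ord j => jm; have := ltn_ord t => tm.
  exists (fcol (FG q.+1 (third j t) j) 0 0); apply: famG => //.
  + by rewrite /third; case: (j : nat) jm => [|[|[|]]] //; case: (t : nat) tm => [|[|]].
  + move=> q' j' t' ne [Eq]; rewrite -Eq; apply: bnd => //.
    case: (eqVneq (j' : nat) j) => [Ej|//]; case: (eqVneq (t' : nat) t) => [Et|//].
    by move: ne; rewrite Eq Ej Et eqxx.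
  + by rewrite /FG /alt /=; case: (j : nat) jm => [|[|[|]]] //; case: (t : nat) tm => [|[|]].
  + by rewrite /FG /alt /=; case: (j : nat) jm => [|[|[|]]] //; case: (t : nat) tm => [|[|]].
  + move=> j' _; rewrite /FG /= (leqNgt m.+1) ltnS qm /alt /= (negPf me).
    by case: (j : nat) jm => [|[|[|]]] //; case: (t : nat) tm => [|[|]] //;
      case: j' => [[|[|]] ?].
  + move=> j' _; rewrite /FG /= (leqNgt m.+1) ltnS qm /alt /= (negPf me).
    by case: (j : nat) jm => [|[|[|]]] //; case: (t : nat) tm => [|[|]] //;
      case: j' => [[|[|]] ?].
- exists (fcol (FG m.+1 0 0) 2 0); apply: famS => //; try (by rewrite eqxx); try (by case=> [[|[|]] ?] ne //; rewrite /= ?eqxx in ne).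
- exists (fcol (FG m.+1 2 2) 2 2); apply: famS => //; try (by rewrite eqxx); try (by case=> [[|[|]] ?] ne //; rewrite /= ?eqxx in ne).
- case: j => [[|[|]] jp] //.
  + exists (fcol (FG m.+1 0 0) 0 0); apply: famS => //; try (by rewrite eqxx); try (by case=> [[|[|]] ?] ne //; rewrite /= ?eqxx in ne).
  + exists (fcol (FG m.+1 0 0) 1 0); apply: famS => //; try (by rewrite eqxx); try (by case=> [[|[|]] ?] ne //; rewrite /= ?eqxx in ne).
- case: j => [[|[|]] jp] //.
  + exists (fcol (FG m.+1 2 2) 0 1); apply: famS => //; try (by rewrite eqxx); try (by case=> [[|[|]] ?] ne //; rewrite /= ?eqxx in ne).
  + exists (fcol (FG m.+1 2 2) 0 0); apply: famS => //; try (by rewrite eqxx); try (by case=> [[|[|]] ?] ne //; rewrite /= ?eqxx in ne).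
Qed.

Lemma inl_vx m (a : 'I_m.+1) (b : 'I_3) : inl (a, b) = vx m a.+1 b.+1.
Proof.
rewrite /vx /=; congr inl; congr pair; apply: val_inj; rewrite /= inordK ?modn_small //.
Qed.

Lemma cover m (x : Vt m) : exists2 e, e \in G_edges m & x \in e.
Proof.
case: x => [[a b]|[]].
- case: (posnP a) => [a0|ap].
  + case: b => [[|[|[|]]] bp] //.
    * exists (sU1 m); first exact: sU1_mem.
      by rewrite inl_vx a0 /sU1 !inE (_ : Ordinal bp = 0 :> nat) // eqxx !orbT.
    * exists (sU1 m); first exact: sU1_mem.
      by rewrite inl_vx a0 /sU1 !inE (_ : Ordinal bp = 1 :> nat) // eqxx !orbT.
    * exists (sV1 m); first exact: sV1_mem.
      by rewrite inl_vx a0 /sV1 !inE (_ : Ordinal bp = 2 :> nat) // eqxx !orbT.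
  + exists (tri m a.+1); first exact: tri_mem.
    rewrite inl_vx /tri !inE; case: b => [[|[|[|]]] bp] //=; by rewrite eqxx ?orbT.
- by exists (sV1 m); [exact: sV1_mem | rewrite /sV1 !inE eqxx].
- by exists (sU1 m); [exact: sU1_mem | rewrite /sU1 !inE eqxx].
Qed.

Theorem mainTheorem20 (k : nat) : 1 <= k ->
  minimal_uncolorable [set: Vt k.*2] (G_edges k.*2).
Proof.
move=> k1; set m := k.*2.
have m0 : 0 < m by rewrite /m -muln2; lia.
have me : ~~ odd m by rewrite /m odd_double.
split; [|split].
- split; first by move=> e _; exact: subsetT.
  move=> e1 e2 h1 h2 s12; apply/eqP; rewrite eqEcard s12 (edge_card m0 h1) (edge_card m0 h2).
  by [].
- exact: not_colorable.
- move=> Vs' E' [[hsub _] [_ hE]] ne.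
  case: (eqVneq E' (G_edges m)) => [EE|EE].
    exfalso; apply: ne; rewrite EE; congr pair; apply/eqP; rewrite eqEsubset subsetT /=.
    apply/subsetP => x _; have [e eG xe] := cover x.
    by apply: (subsetP (hsub e _)) => //; rewrite EE.
  have : ~~ (G_edges m \subset E') by apply: contra EE => h; rewrite eqEsubset hE h.
  case/subsetPn => e eG eE'.
  have [f Hf] := colorable_minus m0 me eG.
  exists f => e' he'; apply: Hf; rewrite in_setD1 (subsetP hE) // andbT.
  by apply: contraNneq eE' => <-.
Qed.
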